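(* Let $p\in[\tfrac12,1)$ and $q:=1-p$. Every $x\in\mathcal{M}_p:=\{\sum_{i\in\mathbb{N}}b_ipq^{i-1}: b_i\in\{0,1\},\ 1\le\sum_{i\in\mathbb{N}}b_i<\infty\}$ has a unique representation in $\mathcal{M}_p$, i.e. if $\sum_{i}b_ipq^{i-1}=\sum_i b_i'pq^{i-1}$ with both sequences $(b_i),(b_i')$ as in the definition of $\mathcal{M}_p$, then $b_i=b_i'$ for all $i$. *)

(* Defs.v *)
From mathcomp Require Import all_boot all_order all_algebra.
From mathcomp Require Import reals.
Set Implicit Arguments. Unset Strict Implicit. Unset Printing Implicit Defensive.
Import Order.TTheory GRing.Theory Num.Theory.
Local Open Scope ring_scope.

(* A 0/1 sequence (b_i) (indexed from 0; paper's index i corresponds to i-1 here)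
   is admissible for M_p when it has finitely many ones and at least one one. *)
Definition Mp_seq (b : nat -> bool) : Prop :=
  (exists N : nat, forall i : nat, (N <= i)%N -> b i = false) /\ (exists i, b i).

(* The (finite) value  sum_i b_i p q^i, truncated at any N bounding the support. *)
Definition Mp_val (R : realType) (p : R) (N : nat) (b : nat -> bool) : R :=
  \sum_(i < N) (b i)%:R * p * (1 - p) ^+ i.

(* Main.v *)
Require Import Defs.
From mathcomp Require Import all_boot all_order all_algebra.
From mathcomp Require Import reals.
From mathcomp Require Import ring lra.
Import Order.TTheory GRing.Theory Num.Theory.
Local Open Scope ring_scope.

Lemma Mp_val_rec (R : realType) (p : R) N b :
  Mp_val p N.+1 b = (b 0%N)%:R * p + (1 - p) * Mp_val p N (fun i => b i.+1).
Proof.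
rewrite /Mp_val big_ord_recl /= expr0 mulr1 mulr_sumr; congr (_ + _).
by apply: eq_bigr => i _; rewrite /bump /= exprS; ring.
Qed.

Lemma Mp_val_bound (R : realType) (p : R) (hp0 : 0 <= p) (hp1 : p <= 1) N b :
  0 <= Mp_val p N b /\ Mp_val p N b <= 1 - (1 - p) ^+ N.
Proof.
elim: N b => [|N IH] b; first by rewrite /Mp_val big_ord0 expr0 subrr.
rewrite Mp_val_rec exprS; have [h1 h2] := IH (fun i => b i.+1).
have q0 : 0 <= 1 - p by lra.
have hb : (0 <= (b 0%N)%:R :> R) && ((b 0%N)%:R <= 1 :> R) by case: (b 0%N) => /=; rewrite ?ler01 ?lexx.
case/andP: hb => hb0 hb1.
split; first by apply: addr_ge0; [apply: mulr_ge0|apply: mulr_ge0].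
have : (b 0%N)%:R * p <= p by nra.
have : (1 - p) * Mp_val p N (fun i => b i.+1) <= (1 - p) * (1 - (1 - p) ^+ N).
  by apply: ler_wpM2l.
nra.
Qed.

Lemma key (R : realType) (p : R) (hp : 1 / 2 <= p) (hp1 : p < 1) N :
  forall b b' : nat -> bool, Mp_val p N b = Mp_val p N b' ->
  forall i, (i < N)%N -> b i = b' i.
Proof.
have q0 : 0 < 1 - p by lra.
have p0 : 0 <= p by lra.
have notb : forall (b b' : nat -> bool) M, b 0%N = true -> b' 0%N = false ->
    Mp_val p M.+1 b <> Mp_val p M.+1 b'.
  move=> c c' M hc hc'; rewrite !Mp_val_rec hc hc' /= mul0r add0r mul1r.
  have [h1 _] := @Mp_val_bound R p p0 (ltW hp1) M (fun i => c i.+1).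
  have [_ h2] := @Mp_val_bound R p p0 (ltW hp1) M (fun i => c' i.+1).
  have hq : 0 < (1 - p) ^+ M by apply: exprn_gt0.
  have : (1 - p) * Mp_val p M (fun i => c' i.+1) <= (1 - p) * (1 - (1 - p) ^+ M).
    by apply: ler_wpM2l => //; apply: ltW.
  have : 0 <= (1 - p) * Mp_val p M (fun i => c i.+1) by apply: mulr_ge0 => //; apply: ltW.
  nra.
elim: N => [|N IH] b b' heq i hi //.
case E: (b 0%N); case E': (b' 0%N).
- move: heq; rewrite !Mp_val_rec E E' => /addrI /(mulfI (lt0r_neq0 q0)) h.
  by case: i hi => [|i] hi; [rewrite E E'|apply: (IH _ _ h)].
- by exfalso; apply: (notb b b' N E E' heq).
- by exfalso; apply: (notb b' b N E' E (esym heq)).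
- move: heq; rewrite !Mp_val_rec E E' => /addrI /(mulfI (lt0r_neq0 q0)) h.
  by case: i hi => [|i] hi; [rewrite E E'|apply: (IH _ _ h)].
Qed.

Theorem lemma5 (R : realType) (p : R) (hp : 1 / 2 <= p) (hp1 : p < 1)
  (b b' : nat -> bool) (hb : Mp_seq b) (hb' : Mp_seq b') (N : nat)
  (hN : forall i : nat, (N <= i)%N -> b i = false)
  (hN' : forall i : nat, (N <= i)%N -> b' i = false)
  (heq : Mp_val p N b = Mp_val p N b') :
  forall i : nat, b i = b' i.
Proof.
move=> i; case: (ltnP i N) => hi; first exact: (@key R p hp hp1 N b b' heq i hi).
by rewrite hN // hN'.
Qed.
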